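(* Let $a\ge b\ge1$ be integers with either $b\ge2$, or $b=1$ and $a\ge5$, and $A=\begin{pmatrix}2&-a\\-b&2\end{pmatrix}$. Let $j,k\in\mathbb Z_+$ with $j\not\equiv k \pmod 2$. Then (1) $\langle\beta_1^j,(\beta_2^k)^\vee\rangle=\langle\beta_2^k,(\beta_1^j)^\vee\rangle$; (2) if $\ell,i\in\mathbb Z_+$ with $j+k=\ell+i$, then $\langle\beta_1^j,(\beta_2^k)^\vee\rangle=\langle\beta_1^\ell,(\beta_2^i)^\vee\rangle$.
   Context: Let $\mathfrak g(A)$ have simple roots $\alpha_1,\alpha_2$, invariant form $(\alpha_1,\alpha_1)=2$, $(\alpha_2,\alpha_2)=2a/b$, $(\alpha_1,\alpha_2)=-a$, and for a real root $\beta$ let $\langle\lambda,\beta^\vee\rangle=2(\lambda,\beta)/(\beta,\beta)$. $\mathbb Z_+=\{0,1,2,\dots\}$. Define $c_0=d_0=0$, $c_1=d_1=1$, $c_{k+2}+c_k=a d_{k+1}$, $d_{k+2}+d_k=b c_{k+1}$, and $\beta_1^j=c_j\alpha_1+d_{j+1}\alpha_2$, $\beta_2^j=c_{j+1}\alpha_1+d_j\alpha_2$. *)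

(* Defs.v *)
From mathcomp Require Import all_boot all_order all_algebra.
Set Implicit Arguments. Unset Strict Implicit. Unset Printing Implicit Defensive.
Import Order.TTheory GRing.Theory Num.Theory.
Local Open Scope ring_scope.

(* cd_step a b n = (c_n, d_n, c_{n+1}, d_{n+1}) where
   c_0 = d_0 = 0, c_1 = d_1 = 1,
   c_{k+2} + c_k = a d_{k+1},  d_{k+2} + d_k = b c_{k+1}. *)
Fixpoint cd_step (a b : int) (n : nat) : int * int * int * int :=
  match n with
  | 0%N => (0, 0, 1, 1)
  | n'.+1 =>
      let: (c0, d0, c1, d1) := cd_step a b n' in
      (c1, d1, a * d1 - c0, b * c1 - d0)
  end.

Definition cseq (a b : int) (n : nat) : int := (cd_step a b n).1.1.1.
Definition dseq (a b : int) (n : nat) : int := (cd_step a b n).1.1.2.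

(* An element x alpha_1 + y alpha_2 of the root lattice, as the pair (x, y). *)
Definition rootv := (int * int)%type.

Definition beta1 (a b : int) (j : nat) : rootv := (cseq a b j, dseq a b j.+1).
Definition beta2 (a b : int) (j : nat) : rootv := (cseq a b j.+1, dseq a b j).

(* Invariant form: (a1,a1) = 2, (a2,a2) = 2a/b, (a1,a2) = -a. *)
Definition invform (a b : int) (u v : rootv) : rat :=
  2 * (u.1%:~R * v.1%:~R)
  + (2 * a%:~R / b%:~R) * (u.2%:~R * v.2%:~R)
  - a%:~R * (u.1%:~R * v.2%:~R + u.2%:~R * v.1%:~R).

Definition pairing (a b : int) (lam beta : rootv) : rat :=
  2 * invform a b lam beta / invform a b beta beta.

(* Main.v *)
Require Import Defs.
From mathcomp Require Import all_boot all_order all_algebra ring.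
Import Order.TTheory GRing.Theory Num.Theory.
Local Open Scope ring_scope.

Lemma cd_stepE (a b : int) n :
  cd_step a b n = (cseq a b n, dseq a b n, cseq a b n.+1, dseq a b n.+1).
Proof.
elim: n => [|n IH] //.
rewrite /cseq /dseq /=. rewrite IH /=.
by [].
Qed.

Lemma crec (a b : int) n : cseq a b n.+2 = a * dseq a b n.+1 - cseq a b n.
Proof. by rewrite {1}/cseq /= cd_stepE. Qed.
Lemma drec (a b : int) n : dseq a b n.+2 = b * cseq a b n.+1 - dseq a b n.
Proof. by rewrite {1}/dseq /= cd_stepE. Qed.

Lemma lin_eq (x y p q K : int) : x - y = K * (p - q) -> p = q -> x = y.
Proof. by move=> h e; apply/eqP; rewrite -subr_eq0 h e subrr mulr0. Qed.

Lemma parity (a b : int) n :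
  (odd n -> cseq a b n = dseq a b n) /\ (~~ odd n -> b * cseq a b n = a * dseq a b n).
Proof.
suff: forall n, ((odd n -> cseq a b n = dseq a b n) /\ (~~ odd n -> b * cseq a b n = a * dseq a b n))
  /\ ((odd n.+1 -> cseq a b n.+1 = dseq a b n.+1) /\ (~~ odd n.+1 -> b * cseq a b n.+1 = a * dseq a b n.+1)).
  by move=> h; case: (h n).
elim=> [|m [[o0 e0] [o1 e1]]].
  by split; split => // _; rewrite /cseq /dseq /= ?mulr0 ?mulr1.
split; first by split.
split=> hp.
- move: hp => /= /negbNE hp.
  rewrite crec drec -o0 //.
  apply: (@lin_eq _ _ (b * cseq a b m.+1) (a * dseq a b m.+1) (-1)); first ring.
  by apply: e1; rewrite /= hp.
- move: hp => /= /negbNE hp.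
  rewrite crec drec.
  have ho : odd m.+1 by rewrite /= hp.
  rewrite (o1 ho).
  apply: (@lin_eq _ _ (b * cseq a b m) (a * dseq a b m) (-1)); first ring.
  exact: e0.
Qed.

Definition s1 (a : int) (u : int * int) : int * int := (a * u.2 - u.1, u.2).
Definition s2 (b : int) (u : int * int) : int * int := (u.1, b * u.1 - u.2).
Definition Bz (a b : int) (u v : int * int) : int :=
  2 * b * (u.1 * v.1) + 2 * a * (u.2 * v.2) - a * b * (u.1 * v.2 + u.2 * v.1).

Lemma Bs1 a b u v : Bz a b (s1 a u) v = Bz a b u (s1 a v).
Proof. rewrite /Bz /s1 /=; ring. Qed.
Lemma Bs2 a b u v : Bz a b (s2 b u) v = Bz a b u (s2 b v).
Proof. rewrite /Bz /s2 /=; ring. Qed.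
Lemma Bsym a b u v : Bz a b u v = Bz a b v u.
Proof. rewrite /Bz; ring. Qed.
Lemma Bs1n a b u : Bz a b (s1 a u) (s1 a u) = Bz a b u u.
Proof. rewrite /Bz /s1 /=; ring. Qed.
Lemma Bs2n a b u : Bz a b (s2 b u) (s2 b u) = Bz a b u u.
Proof. rewrite /Bz /s2 /=; ring. Qed.

Lemma b1S a b n : beta1 a b n.+1 = s2 b (beta2 a b n).
Proof. by rewrite /beta1 /beta2 /s2 /= drec. Qed.
Lemma b2S a b n : beta2 a b n.+1 = s1 a (beta1 a b n).
Proof. by rewrite /beta1 /beta2 /s1 /= crec. Qed.

Lemma norms a b n :
  Bz a b (beta1 a b n) (beta1 a b n) = (if odd n then 2 * b else 2 * a)
  /\ Bz a b (beta2 a b n) (beta2 a b n) = (if odd n then 2 * a else 2 * b).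
Proof.
elim: n => [|n [h1 h2]].
  by rewrite /beta1 /beta2 /Bz /cseq /dseq /=; split; ring.
rewrite b1S b2S Bs1n Bs2n h1 h2 /=; by case: (odd n).
Qed.

Lemma fshift a b l i :
  Bz a b (beta1 a b l.+2) (beta2 a b i) = Bz a b (beta1 a b l) (beta2 a b i.+2).
Proof.
by rewrite (b1S a b l.+1) Bs2 -(b1S a b i) (b2S a b l) Bs1 -(b2S a b i.+1).
Qed.

Definition f a b l i := Bz a b (beta1 a b l) (beta2 a b i).

Lemma fshiftm a b m l i : f a b (l + m.*2)%N i = f a b l (i + m.*2)%N.
Proof.
elim: m l i => [|m IH] l i; first by rewrite !addn0.
rewrite doubleS !addnS /f fshift.
have := IH l i.+2; rewrite /f => ->.
by rewrite addSn addSn.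
Qed.

Lemma fbase a b i : ~~ odd i -> b * f a b 0 i.+1 = a * f a b 1 i.
Proof.
move=> hi.
have o1 : odd i.+1 by rewrite /= hi.
have e2 : ~~ odd i.+2 by rewrite /= hi.
have := (parity a b i.+1).1 o1; have := (parity a b i.+2).2 e2.
rewrite /f /Bz /beta1 /beta2 /= => hp hc.
have c0 : cseq a b 0 = 0 by [].
have d1 : dseq a b 1 = 1 by [].
have c1 : cseq a b 1 = 1 by [].
have d2 : dseq a b 2 = b by rewrite drec c1 mulr1 [dseq _ _ 0]/dseq /= subr0.
rewrite c0 d1 c1 d2 hc.
move: hp; rewrite drec hc => hp.
apply: (@lin_eq _ _ (b * cseq a b i.+2) (a * (b * dseq a b i.+1 - dseq a b i)) (- (a * b))); first ring.
exact: hp.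
Qed.

Lemma invformE (a b : int) u v : b != 0 ->
  invform a b u v = (Bz a b u v)%:~R / b%:~R :> rat.
Proof.
move=> hb.
have hb' : (b%:~R : rat) != 0 by rewrite intr_eq0.
rewrite /invform /Bz !(intrD, intrM, intrB) /=.
field. done.
Qed.

Lemma pairingE (a b : int) lam beta : b != 0 ->
  pairing a b lam beta = 2 * (Bz a b lam beta)%:~R / (Bz a b beta beta)%:~R :> rat.
Proof.
move=> hb.
have hb' : (b%:~R : rat) != 0 by rewrite intr_eq0.
rewrite /pairing !invformE // invfM invrK.
by rewrite [_^-1 * _]mulrC !mulrA divfK.
Qed.

Lemma Pl (a b : int) l i : a != 0 -> b != 0 -> odd l != odd i ->
  pairing a b (beta1 a b l) (beta2 a b i) = 2 * (f a b 0 (l+i))%:~R / (2*a)%:~R :> rat.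
Proof.
move=> ha hb hp.
have ha' : (a%:~R : rat) != 0 by rewrite intr_eq0.
have hb' : (b%:~R : rat) != 0 by rewrite intr_eq0.
rewrite pairingE // -/(f a b l i) (norms a b i).2.
have := odd_double_half l; set m := l./2 => hl.
case hi: (odd i); move: hp; rewrite hi => hp.
- have hl0 : odd l = false by move: hp; case: (odd l).
  rewrite hl0 add0n in hl.
  by rewrite -hl -(add0n m.*2) fshiftm addnC.
- have hl1 : odd l = true by move: hp; case: (odd l).
  rewrite hl1 in hl.
  rewrite -hl fshiftm.
  have e : (~~ odd (i + m.*2)) by rewrite oddD odd_double hi.
  have := @fbase a b _ e.
  change (nat_of_bool true) with 1%N.
  have -> : (1 + m.*2 + i = (i + m.*2).+1)%N by rewrite addnC addnA addn1.
  set F0 := f a b 0 _; set F1 := f a b 1 _ => h.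
  have h' : (b%:~R : rat) * F0%:~R = a%:~R * F1%:~R by rewrite -!intrM h.
  have -> : (F1%:~R : rat) = b%:~R * F0%:~R / a%:~R by rewrite h' mulrC mulKf.
  rewrite !intrM.
  field; by rewrite ha' hb'.
Qed.

Theorem lemma3p9 (a b : nat) (j k : nat) :
  (1 <= b)%N -> (b <= a)%N ->
  ((2 <= b)%N \/ (b = 1%N /\ (5 <= a)%N)) ->
  odd j != odd k ->
  pairing a b (beta1 a b j) (beta2 a b k) = pairing a b (beta2 a b k) (beta1 a b j)
  /\ (forall l i : nat, (j + k = l + i)%N ->
        pairing a b (beta1 a b j) (beta2 a b k) = pairing a b (beta1 a b l) (beta2 a b i)).
Proof.
move=> hb1 hba _ hjk.
have hb : (b%:Z != 0) by rewrite eqz_nat -lt0n.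
have ha : (a%:Z != 0) by rewrite eqz_nat -lt0n (leq_trans hb1 hba).
split.
  rewrite !pairingE // (Bsym _ _ (beta2 a b k) (beta1 a b j)) (norms _ _ k).2 (norms _ _ j).1.
  by move: hjk; case: (odd j); case: (odd k).
move=> l i e.
have hli : odd l != odd i.
  have : odd (j + k) = odd (l + i) by rewrite e.
  rewrite !oddD; move: hjk.
  by case: (odd j); case: (odd k); case: (odd l); case: (odd i).
by rewrite !Pl // e.
Qed.
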